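(* Assume $m_y=0$ and let $\Pi=\{\pi\ge 0: B_2^\intercal\pi\le c_2^\intercal\}$. For a given $x\in\mathcal X$, consider the bilinear program $\max\{(d-B_1x-Eu)^\intercal\pi:\ u\in\mathcal U(x),\ \pi\in\Pi\}$. When it has a finite optimal value, there exists an optimal solution $(u^*,\pi^* )$ with $\pi^*$ an extreme point of $\Pi$. When it is unbounded, there exist $u^*\in\mathcal U(x)$ and an extreme ray $\gamma^*$ of $\Pi$ such that $(d-B_1x-Eu^* )^\intercal\gamma^*>0$.
   Context: Let $\mathcal X=\{x\in\mathbb Z^{m_x}_+\times\mathbb R^{n_x}_+: Ax\ge b\}$, $\mathcal U(x)=\{u\in\mathbb Z^{m_u}_+\times\mathbb R^{n_u}_+: F(x)u\le h+Gx\}$ ($F(x)$ a matrix depending on $x$), and recourse set $\mathcal Y(x,u)=\{y\in\mathbb R^{n_y}_+: B_2y\ge d-B_1x-Eu\}$ with cost row vector $c_2$. Standing assumptions: (A1) $\mathcal U(x)\ne\emptyset$ for all $x\in\mathcal X$; (A2) $\mathcal U(x)$ is bounded for all $x\in\mathcal X$; (A3) $\min\{c_1x+c_2y: x\in\mathcal X,u\in\mathcal U(x),y\in\mathcal Y(x,u)\}$ has a finite optimal value. *)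

(* Defs.v *)
From HB Require Import structures.
From mathcomp Require Import all_boot all_order all_algebra.
From mathcomp Require Import reals.
Set Implicit Arguments. Unset Strict Implicit. Unset Printing Implicit Defensive.
Import Order.TTheory GRing.Theory Num.Theory.
Local Open Scope ring_scope.

Section Defs.
Variable R : realType.

Definition leV n (u v : 'cV[R]_n) : Prop := forall i, u i 0 <= v i 0.

Definition mixed_nonneg m n (z : 'cV[R]_(m + n)) : Prop :=
  forall i : 'I_(m + n), 0 <= z i 0 /\ ((i < m)%N -> exists k : int, z i 0 = k%:~R).

Definition boundedV n (S : 'cV[R]_n -> Prop) : Prop :=
  exists M : R, forall z, S z -> forall i, `|z i 0| <= M.

Definition extreme_point n (S : 'cV[R]_n -> Prop) (p : 'cV[R]_n) : Prop :=
  S p /\ forall a b (t : R), S a -> S b -> 0 < t -> t < 1 ->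
    p = t *: a + (1 - t) *: b -> a = b.

Definition recession_cone n (S : 'cV[R]_n -> Prop) (g : 'cV[R]_n) : Prop :=
  forall p, S p -> forall t : R, 0 <= t -> S (p + t *: g).

Definition extreme_ray n (S : 'cV[R]_n -> Prop) (g : 'cV[R]_n) : Prop :=
  recession_cone S g /\ g != 0 /\
  forall g1 g2, recession_cone S g1 -> recession_cone S g2 -> g = g1 + g2 ->
    exists a : R, 0 <= a /\ g1 = a *: g.

End Defs.

(* Main.v *)
Require Import Defs.
From HB Require Import structures.
From mathcomp Require Import all_boot all_order all_algebra.
From mathcomp Require Import reals.
From mathcomp Require Import lra zify.
From Stdlib Require Import Classical.
Import Order.TTheory GRing.Theory Num.Theory.
Local Open Scope ring_scope.
Set Implicit Arguments. Unset Strict Implicit. Unset Printing Implicit Defensive.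
Section LP.
Variable R : realType.

Definition lin n (a : 'rV[R]_n) (p : 'cV[R]_n) : R := (a *m p) 0 0.

Lemma linD n (a : 'rV[R]_n) p q : lin a (p + q) = lin a p + lin a q.
Proof. by rewrite /lin mulmxDr mxE. Qed.
Lemma linZ n (a : 'rV[R]_n) t p : lin a (t *: p) = t * lin a p.
Proof. by rewrite /lin -scalemxAr mxE. Qed.
Lemma linN n (a : 'rV[R]_n) p : lin a (- p) = - lin a p.
Proof. by rewrite /lin mulmxN mxE. Qed.
Lemma linB n (a : 'rV[R]_n) p q : lin a (p - q) = lin a p - lin a q.
Proof. by rewrite linD linN. Qed.
Lemma lin0 n (a : 'rV[R]_n) : lin a 0 = 0.
Proof. by rewrite /lin mulmx0 mxE. Qed.
Lemma linNr n (a : 'rV[R]_n) p : lin (- a) p = - lin a p.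
Proof. by rewrite /lin mulNmx mxE. Qed.
Lemma lin_delta n (i : 'I_n) (p : 'cV[R]_n) : lin (delta_mx 0 i) p = p i 0.
Proof. by rewrite /lin -rowE mxE. Qed.
Lemma lin_row q n (M : 'M[R]_(q, n)) j p : lin (row j M) p = (M *m p) j 0.
Proof. by rewrite /lin -row_mul mxE. Qed.

Lemma seq_min (T : eqType) (phi : T -> R) (s : seq T) : s != [::] ->
  exists2 x, x \in s & forall y, y \in s -> phi x <= phi y.
Proof.
elim: s => [//|x s IH] _.
case: (eqVneq s [::]) => [->|/IH [m Hm Hmin]].
  by exists x; rewrite ?mem_head // => y; rewrite in_cons in_nil orbF => /eqP ->.
case: (lerP (phi x) (phi m)) => H.
  exists x; first exact: mem_head.
  move=> y; rewrite in_cons => /orP [/eqP ->//|/Hmin]; exact: le_trans.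
exists m; first by rewrite in_cons Hm orbT.
move=> y; rewrite in_cons => /orP [/eqP ->|/Hmin //]; exact: ltW.
Qed.

Lemma seq_max (T : eqType) (phi : T -> R) (s : seq T) : s != [::] ->
  exists2 x, x \in s & forall y, y \in s -> phi y <= phi x.
Proof.
move=> /(seq_min (fun x => - phi x)) [x Hx H]; exists x => // y /H.
by rewrite lerN2.
Qed.

Lemma finite_choice (T : finType) (V : eqType) (P : T -> V -> Prop) :
  (forall t v v', P t v -> P t v' -> v = v') ->
  exists L : seq V, (forall v, v \in L -> exists t, P t v) /\
                    (forall t v, P t v -> v \in L).
Proof.
move=> Hu.
suff [L [H1 H2]] : exists L : seq V, (forall v, v \in L -> exists t, P t v) /\
   (forall t, t \in enum T -> forall v, P t v -> v \in L).
  by exists L; split=> // t v; apply: H2; rewrite mem_enum.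
elim: (enum T) => [|t s [L [H1 H2]]].
  by exists [::]; split=> // v; rewrite in_nil.
case: (classic (exists v, P t v)) => [[v Hv]|Hno].
- exists (v :: L); split.
  + move=> v'; rewrite in_cons => /orP [/eqP ->|/H1 //]; by exists t.
  + move=> t'; rewrite in_cons => /orP [/eqP -> v' Hv'|Ht' v' Hv'].
      by rewrite (Hu _ _ _ Hv' Hv) mem_head.
    by rewrite in_cons (H2 _ Ht' _ Hv') orbT.
- exists L; split=> // t'; rewrite in_cons => /orP [/eqP -> v Hv|]; last exact: H2.
  by exfalso; apply: Hno; exists v.
Qed.

Section Generic.
Variables (n : nat) (I : finType) (a : I -> 'rV[R]_n) (c : I -> R)
  (D Q : 'cV[R]_n -> Prop).
Hypothesis HD : forall d t, D d -> D (t *: d).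
Hypothesis HQ : forall p d t, Q p -> D d -> Q (p + t *: d).
Hypothesis Hpt : forall d, D d -> (forall i, lin (a i) d = 0) -> d = 0.

Definition feas p := Q p /\ forall i, lin (a i) p <= c i.
Definition act p := [set i | lin (a i) p == c i].
Definition basic p := forall d, D d ->
  (forall i, i \in act p -> lin (a i) d = 0) -> d = 0.

Lemma feas_ray p g t : feas p -> D g -> (forall i, lin (a i) g <= 0) -> 0 <= t ->
  feas (p + t *: g).
Proof.
move=> [Qp Fp] Dg Hg t0; split; first exact: HQ.
move=> i; rewrite linD linZ.
have := mulr_ge0_le0 t0 (Hg i); have := Fp i; lra.
Qed.

Lemma move_step (w : 'rV[R]_n) p d : feas p -> D d ->
  (forall i, i \in act p -> lin (a i) d = 0) -> 0 <= lin w d ->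
  (exists j, 0 < lin (a j) d) ->
  exists p', feas p' /\ act p \proper act p' /\ lin w p <= lin w p'.
Proof.
move=> [Qp Fp] Dd Hact Hw [j0 Hj0].
set s := [seq j <- enum I | 0 < lin (a j) d].
have : s != [::].
  apply/eqP => /(congr1 (fun s => j0 \in s)).
  by rewrite /s mem_filter mem_enum Hj0 in_nil.
move=> /(seq_min (fun j => (c j - lin (a j) p) / lin (a j) d)) [j Hj Hmin].
move: Hj; rewrite mem_filter mem_enum andbT => Hj.
set t := (c j - lin (a j) p) / lin (a j) d.
have t0 : 0 <= t by rewrite /t divr_ge0 // ?subr_ge0 ?Fp // ltW.
exists (p + t *: d); split; [split|split].
- exact: HQ.
- move=> i; rewrite linD linZ.
  case: (ltrP 0 (lin (a i) d)) => Hi.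
  + have : t <= (c i - lin (a i) p) / lin (a i) d.
      by apply: Hmin; rewrite mem_filter mem_enum Hi.
    rewrite ler_pdivlMr // => H; lra.
  + have := mulr_ge0_le0 t0 Hi; have := Fp i; lra.
- apply/properP; split.
  + apply/subsetP => i Hi; have := Hact i Hi; move: Hi.
    by rewrite !inE linD linZ => /eqP -> ->; rewrite mulr0 addr0.
  + exists j.
      rewrite inE linD linZ /t (divfK (lt0r_neq0 Hj)).
      by apply/eqP; lra.
    apply/negP => /Hact; move: Hj; rewrite lt_def => /andP [+ _] => /eqP H /H //.
- rewrite linD linZ lerDl; exact: mulr_ge0.
Qed.

Definition rayP (w : 'rV[R]_n) :=
  exists g, D g /\ (forall i, lin (a i) g <= 0) /\ 0 < lin w g.

Lemma nonbasic_step (w : 'rV[R]_n) p : feas p -> ~ basic p ->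
  rayP w \/ exists p', feas p' /\ act p \proper act p' /\ lin w p <= lin w p'.
Proof.
move=> Fp nb.
have [d [Dd [Ha Hd]]] : exists d, D d /\
    (forall i, i \in act p -> lin (a i) d = 0) /\ d <> 0.
  apply: NNPP => H; apply: nb => d Dd Ha; apply: NNPP => Hd; apply: H.
  by exists d.
have key : forall d, D d -> (forall i, i \in act p -> lin (a i) d = 0) ->
    d <> 0 -> 0 <= lin w d ->
    rayP w \/ exists p', feas p' /\ act p \proper act p' /\ lin w p <= lin w p'.
  move=> {}d {}Dd {}Ha {}Hd Hwd.
  case: (classic (exists j, 0 < lin (a j) d)) => [Hj|Hnj].
    by right; exact: (move_step Fp Dd Ha Hwd Hj).
  have Hle : forall j, lin (a j) d <= 0.
    by move=> j; rewrite leNgt; apply/negP => Hj; apply: Hnj; exists j.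
  case: (ltrP 0 (lin w d)) => Hw.
    by left; exists d.
  have Hw0 : lin w (- d) = 0 by rewrite linN; lra.
  right; apply: (@move_step w p (- d) Fp).
  - by rewrite -scaleN1r; apply: HD.
  - by move=> i /Ha; rewrite linN => ->; rewrite oppr0.
  - by rewrite Hw0.
  - apply: NNPP => H'; apply: Hd; apply: Hpt => // i.
    apply/eqP; rewrite eq_le Hle /= leNgt; apply/negP => Hlt; apply: H'.
    by exists i; rewrite linN oppr_gt0.
case: (lerP 0 (lin w d)) => Hwd; first exact: (key d Dd Ha Hd Hwd).
apply: (key (- d)).
- by rewrite -scaleN1r; apply: HD.
- by move=> i /Ha; rewrite linN => ->; rewrite oppr0.
- by move=> /eqP; rewrite oppr_eq0 => /eqP.
- rewrite linN; lra.
Qed.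

Lemma vertex_or_ray (w : 'rV[R]_n) p : feas p ->
  rayP w \/ exists p', feas p' /\ basic p' /\ lin w p <= lin w p'.
Proof.
move=> Fp.
suff H : forall N p, (#|I| - #|act p| <= N)%N -> feas p ->
    rayP w \/ exists p', feas p' /\ basic p' /\ lin w p <= lin w p'.
  exact: (H _ p (leqnn _) Fp).
elim=> [|N IH] {}p HN {}Fp.
- case: (classic (basic p)) => Hb; first by right; exists p.
  case: (@nonbasic_step w p Fp Hb) => [|[p' [_ [Hpr _]]]]; first by left.
  have := proper_card Hpr; have := max_card (mem (act p')).
  move: HN; rewrite -/#|act p'|; lia.
- case: (classic (basic p)) => Hb; first by right; exists p.
  case: (@nonbasic_step w p Fp Hb) => [|[p' [Fp' [Hpr Hw]]]]; first by left.
  have HN' : (#|I| - #|act p'| <= N)%N.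
    have := proper_card Hpr; have := max_card (mem (act p')).
    move: HN; rewrite -/#|act p'|; lia.
  case: (IH p' HN' Fp') => [|[p'' [F'' [B'' H'']]]]; first by left.
  by right; exists p''; split; [|split=> //; exact: le_trans H''].
Qed.

Lemma basic_extreme v a0 b0 t : basic v -> feas v -> feas a0 -> feas b0 ->
  D (a0 - b0) -> 0 < t -> t < 1 -> v = t *: a0 + (1 - t) *: b0 -> a0 = b0.
Proof.
move=> Bv Fv [_ Fa] [_ Fb] Dab t0 t1 Hv.
apply/eqP; rewrite -subr_eq0; apply/eqP; apply: Bv => // i.
rewrite inE Hv linD !linZ => /eqP H.
have := Fa i; have := Fb i; rewrite linB; nra.
Qed.

Lemma basic_finite (K : finType) (key : 'cV[R]_n -> K) :
  (forall v v', feas v -> feas v' -> key v = key v' -> D (v - v')) ->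
  exists L : seq 'cV[R]_n, (forall v, v \in L -> feas v /\ basic v) /\
                           (forall v, feas v -> basic v -> v \in L).
Proof.
move=> Hk.
pose P := fun (t : ({set I} * K)%type) v =>
  feas v /\ basic v /\ act v = t.1 /\ key v = t.2.
have Hu : forall t v v', P t v -> P t v' -> v = v'.
  move=> [S k] v v' /= [Fv [Bv [Av Kv]]] [Fv' [Bv' [Av' Kv']]].
  apply/eqP; rewrite -subr_eq0; apply/eqP; apply: Bv.
    by apply: Hk => //; rewrite Kv Kv'.
  move=> i Hi; have Hi' : i \in act v' by rewrite Av' -Av.
  move: Hi Hi'; rewrite !inE linB => /eqP -> /eqP ->; exact: subrr.
have [L [H1 H2]] := finite_choice Hu.
exists L; split.
  by move=> v /H1 [t [? [? _]]].
by move=> v Fv Bv; apply: (H2 (act v, key v)).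
Qed.

End Generic.
Definition rowsS nn q (M : 'M[R]_(q, nn)) (s : ('I_nn + 'I_q)%type) : 'rV[R]_nn :=
  match s with inl i => - delta_mx 0 i | inr j => row j M end.
Definition rhsS nn q (hv : 'cV[R]_q) (s : ('I_nn + 'I_q)%type) : R :=
  match s with inl _ => 0 | inr j => hv j 0 end.

Lemma feasS nn q (M : 'M[R]_(q, nn)) hv (Qp : 'cV[R]_nn -> Prop) p :
  feas (rowsS M) (rhsS hv) Qp p <-> Qp p /\ leV 0 p /\ leV (M *m p) hv.
Proof.
split.
- move=> [Qp' F]; split=> //; split=> i.
  + have := F (inl i); rewrite /= linNr lin_delta mxE; lra.
  + by have := F (inr i); rewrite /= lin_row.
- move=> [Qp' [H1 H2]]; split=> // [[i|j]] /=.
  + rewrite linNr lin_delta; have := H1 i; rewrite mxE; lra.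
  + rewrite lin_row; exact: H2.
Qed.

Lemma rowsS_neg nn q (M : 'M[R]_(q, nn)) i p : lin (rowsS M (inl i)) p = - p i 0.
Proof. by rewrite /= linNr lin_delta. Qed.

Lemma pointedS nn q (M : 'M[R]_(q, nn)) d :
  (forall s, lin (rowsS M (inl s)) d = 0) -> d = 0.
Proof.
move=> H; apply/matrixP => i j; rewrite (ord1 j) [RHS]mxE.
have := H i; rewrite rowsS_neg; lra.
Qed.

Lemma bounded_ray n (S : 'cV[R]_n -> Prop) u g : boundedV S ->
  (forall t, 0 <= t -> S (u + t *: g)) -> g = 0.
Proof.
move=> [Mb HM] H; apply/matrixP => i j; rewrite (ord1 j) [RHS]mxE.
apply: NNPP => Hg.
have gp : 0 < `|g i 0| by rewrite normr_gt0; apply/eqP.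
have Mb0 : `|u i 0| <= Mb.
  by have := HM _ (H 0 (lexx _)) i; rewrite scale0r addr0.
set t := (Mb + `|u i 0| + 1) / `|g i 0|.
have t0 : 0 <= t by rewrite /t divr_ge0 // ?ltW //; have := normr_ge0 (u i 0); lra.
have := HM _ (H t t0) i; rewrite !mxE.
have Ht : `|t * g i 0| = Mb + `|u i 0| + 1.
  by rewrite normrM (ger0_norm t0) /t (divfK (lt0r_neq0 gp)).
have := ler_normB (u i 0 + t * g i 0) (u i 0).
rewrite (addrC (u i 0)) addrK Ht; lra.
Qed.

Lemma intnat (y : R) : 0 <= y -> (exists k : int, y = k%:~R) -> (Num.truncn y)%:R = y.
Proof.
move=> y0 [k Hk]; apply: truncnK; rewrite -intrEge0 // Hk; exact: intr_int.
Qed.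

Lemma obj_split r m n (d : 'cV[R]_r) (E : 'M[R]_(r, n)) (B1 : 'M[R]_(r, m)) x u v :
  lin (d - B1 *m x - E *m u)^T v = lin (d - B1 *m x)^T v - lin (v^T *m E) u.
Proof.
rewrite /lin linearB /= mulmxBl mxE [X in _ + X]mxE; congr (_ - _).
have -> : (E *m u)^T *m v = ((v^T *m E) *m u)^T by rewrite !trmx_mul trmxK mulmxA.
by rewrite mxE.
Qed.
End LP.

Theorem corollary3 (R : realType)
  (mx nx mu nu ny p q r : nat)
  (A : 'M[R]_(p, mx + nx)) (b : 'cV[R]_p)
  (F : 'cV[R]_(mx + nx) -> 'M[R]_(q, mu + nu)) (h : 'cV[R]_q)
  (G : 'M[R]_(q, mx + nx))
  (B1 : 'M[R]_(r, mx + nx)) (B2 : 'M[R]_(r, ny)) (E : 'M[R]_(r, mu + nu))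
  (d : 'cV[R]_r) (c1 : 'rV[R]_(mx + nx)) (c2 : 'rV[R]_ny)
  (inX : 'cV[R]_(mx + nx) -> Prop)
  (inU : 'cV[R]_(mx + nx) -> 'cV[R]_(mu + nu) -> Prop)
  (inY : 'cV[R]_(mx + nx) -> 'cV[R]_(mu + nu) -> 'cV[R]_ny -> Prop)
  (Pi : 'cV[R]_r -> Prop)
  (obj : 'cV[R]_(mx + nx) -> 'cV[R]_(mu + nu) -> 'cV[R]_r -> R) :
  (* the sets X, U(x), Y(x,u) and Pi, and the bilinear objective *)
  (forall x, inX x <-> mixed_nonneg x /\ leV b (A *m x)) ->
  (forall x u, inU x u <-> mixed_nonneg u /\ leV (F x *m u) (h + G *m x)) ->
  (forall x u y, inY x u y <->
     leV 0 y /\ leV (d - B1 *m x - E *m u) (B2 *m y)) ->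
  (forall pi, Pi pi <-> leV 0 pi /\ leV (B2^T *m pi) c2^T) ->
  (forall x u pi, obj x u pi = ((d - B1 *m x - E *m u)^T *m pi) 0 0) ->
  (* standing assumptions (A1), (A2), (A3) *)
  (forall x, inX x -> exists u, inU x u) ->
  (forall x, inX x -> boundedV (inU x)) ->
  ((exists x u y, inX x /\ inU x u /\ inY x u y) /\
   (exists L : R, forall x u y, inX x -> inU x u -> inY x u y ->
      L <= (c1 *m x) 0 0 + (c2 *m y) 0 0)) ->
  forall x, inX x ->
  (* finite optimal value => optimal solution with pi* an extreme point *)
  (((exists u pi, inU x u /\ Pi pi) /\
    (exists M : R, forall u pi, inU x u -> Pi pi -> obj x u pi <= M)) ->
   exists us pis, inU x us /\ extreme_point Pi pis /\
     forall u pi, inU x u -> Pi pi -> obj x u pi <= obj x us pis)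
  /\
  (* unbounded => u* and an extreme ray gamma* with positive objective *)
  ((forall M : R, exists u pi, inU x u /\ Pi pi /\ M < obj x u pi) ->
   exists us gs, inU x us /\ extreme_ray Pi gs /\ 0 < obj x us gs).
Proof.
move=> HX HU HY HPi Hobj A1 A2 A3 x Xx.
pose TT := fun _ : 'cV[R]_r => True.
pose aP := rowsS (B2^T). pose cP := rhsS (nn := r) (c2^T).
have HDT : forall (d0 : 'cV[R]_r) (t : R), TT d0 -> TT (t *: d0) by [].
have HQT : forall (p0 d0 : 'cV[R]_r) (t : R), TT p0 -> TT d0 -> TT (p0 + t *: d0) by [].
have HptP : forall d0, TT d0 -> (forall i, lin (aP i) d0 = 0) -> d0 = 0.
  by move=> d0 _ H; apply: (pointedS (M := B2^T)) => s; exact: (H (inl s)).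
have PiE : forall pi, Pi pi <-> feas aP cP TT pi.
  move=> pi; have := feasS (B2^T) (c2^T) TT pi; have := HPi pi; rewrite /TT; tauto.
have objE : forall uu pi, obj x uu pi = lin (d - B1 *m x - E *m uu)^T pi.
  by move=> uu pi; rewrite Hobj.
pose aU := rowsS (F x). pose cU := rhsS (nn := mu + nu) (h + G *m x).
pose DU := fun dd : 'cV[R]_(mu+nu) => forall i : 'I_(mu+nu), (i < mu)%N -> dd i 0 = 0.
pose QU := fun uu : 'cV[R]_(mu+nu) =>
  forall i : 'I_(mu+nu), (i < mu)%N -> exists k : int, uu i 0 = k%:~R.
have HDU : forall dd t, DU dd -> DU (t *: dd).
  by move=> dd t H i Hi; rewrite mxE H // mulr0.
have HQU : forall pp dd t, QU pp -> DU dd -> QU (pp + t *: dd).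
  move=> pp dd t Hp Hd i Hi; rewrite !mxE Hd // mulr0 addr0; exact: Hp.
have HptU : forall dd, DU dd -> (forall i, lin (aU i) dd = 0) -> dd = 0.
  by move=> dd _ H; apply: (pointedS (M := F x)) => s; exact: (H (inl s)).
have UE : forall uu, inU x uu <-> feas aU cU QU uu.
  move=> uu; have := feasS (F x) (h + G *m x) QU uu; have := HU x uu.
  have : mixed_nonneg uu <-> leV 0 uu /\ QU uu.
    split.
      move=> H; split=> i; [rewrite mxE; exact: (H i).1 | exact: (H i).2].
    move=> [H1 H2] i; split; [by have := H1 i; rewrite mxE | exact: H2].
  tauto.
have [Mb HMb] := A2 x Xx.
pose N := Num.truncn Mb.
pose key := fun uu : 'cV[R]_(mu+nu) =>
  [ffun i : 'I_(mu+nu) => (inord (Num.truncn (uu i 0)) : 'I_N.+1)].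
have Hkey : forall v v', feas aU cU QU v -> feas aU cU QU v' -> key v = key v' ->
    DU (v - v').
  move=> v v' Fv Fv' Hk i Hi.
  have [Qv [Nv _]] := (feasS (F x) (h + G *m x) QU v).1 Fv.
  have [Qv' [Nv' _]] := (feasS (F x) (h + G *m x) QU v').1 Fv'.
  have Bv := HMb v ((UE v).2 Fv) i.
  have Bv' := HMb v' ((UE v').2 Fv') i.
  have Ev : (Num.truncn (v i 0))%:R = v i 0.
    by apply: intnat; [have := Nv i; rewrite mxE | exact: Qv].
  have Ev' : (Num.truncn (v' i 0))%:R = v' i 0.
    by apply: intnat; [have := Nv' i; rewrite mxE | exact: Qv'].
  have Tv : (Num.truncn (v i 0%R) < N.+1)%N.
    by rewrite ltnS; apply: le_truncn; exact: le_trans (ler_norm _) Bv.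
  have Tv' : (Num.truncn (v' i 0%R) < N.+1)%N.
    by rewrite ltnS; apply: le_truncn; exact: le_trans (ler_norm _) Bv'.
  have := congr1 (fun f : {ffun 'I_(mu+nu) -> 'I_N.+1} => val (f i)) Hk; rewrite /= !ffunE !inordK // => Ht.
  by rewrite !mxE -Ev -Ev' Ht subrr.
have [LU [LU1 LU2]] := basic_finite Hkey.
have Uattain : forall (wv : 'rV[R]_(mu+nu)) uu, inU x uu ->
    exists2 u', u' \in LU & lin wv uu <= lin wv u'.
  move=> wv uu Uu.
  case: (vertex_or_ray HDU HQU HptU wv ((UE uu).1 Uu)) =>
    [[g [Dg [Hg Hwg]]]|[u' [Fu' [Bu' Hle]]]].
  - exfalso.
    have g0 : g = 0.
      apply: (bounded_ray (S := inU x) (u := uu) (A2 x Xx)) => t t0.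
      apply/UE; apply: (feas_ray HQU) => //; exact/UE.
    by move: Hwg; rewrite g0 lin0 ltxx.
  - by exists u' => //; apply: LU2.
have [LP [LP1 LP2]] := basic_finite (a:=aP) (c:=cP) (D:=TT) (Q:=TT)
  (key := fun _ => tt) (fun _ _ _ _ _ => Logic.I).
pose pairs := [seq (a0, b0) | a0 <- LU, b0 <- LP].
have dom : forall uu pi, inU x uu -> Pi pi ->
    ~ (exists g, (forall s, lin (aP s) g <= 0) /\
         0 < lin (d - B1 *m x - E *m uu)^T g) ->
    exists2 pr, pr \in pairs & obj x uu pi <= obj x pr.1 pr.2.
  move=> uu pi Uu Ppi NR.
  case: (vertex_or_ray HDT HQT HptP (d - B1 *m x - E *m uu)^T ((PiE pi).1 Ppi))
    => [[g [_ [Hg Hwg]]]|[v [Fv [Bv Hle]]]].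
    by exfalso; apply: NR; exists g.
  have [u' Hu' Hle2] := Uattain (- (v^T *m E)) uu Uu.
  exists (u', v); first by apply: allpairs_f => //; apply: LP2.
  rewrite /= !objE; apply: (le_trans Hle).
  rewrite !obj_split; move: Hle2; rewrite !linNr; lra.
split.
- move=> [[u0 [pi0 [U0 P0]]] [M HM]].
  have NR : forall uu, inU x uu -> ~ (exists g, (forall s, lin (aP s) g <= 0) /\
         0 < lin (d - B1 *m x - E *m uu)^T g).
    move=> uu Uu [g [Hg Hwg]].
    pose t := (`|M - obj x uu pi0| + 1) / lin (d - B1 *m x - E *m uu)^T g.
    have t0 : 0 <= t.
      by rewrite /t divr_ge0 // ?ltW //; have := normr_ge0 (M - obj x uu pi0); lra.
    have Pt : Pi (pi0 + t *: g).
      by apply/PiE; apply: (feas_ray HQT) => //; exact/PiE.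
    move: (HM _ _ Uu Pt) (ler_norm (M - obj x uu pi0)).
    rewrite /t !objE linD linZ (divfK (lt0r_neq0 Hwg)); lra.
  have [pr0 Hpr0 _] := dom u0 pi0 U0 P0 (NR u0 U0).
  have Hne : pairs != [::] by apply/eqP => Hn; rewrite Hn in Hpr0.
  have [[us pis] Hm Hmax] := seq_max (fun pr => obj x pr.1 pr.2) Hne.
  move: (Hm) => /allpairsP [[a0 b0] [/= Ha0 Hb0 [Hus Hpis]]].
  subst a0 b0.
  exists us, pis; split; first by apply/UE; have [] := LU1 us Ha0.
  have [Fp Bp] := LP1 pis Hb0.
  split.
    split; first exact/PiE.
    move=> a1 b1 t Pa1 Pb1 t0 t1 Hv.
    exact: (basic_extreme Bp Fp ((PiE a1).1 Pa1) ((PiE b1).1 Pb1) Logic.I t0 t1 Hv).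
  move=> uu pi Uu Ppi.
  have [pr Hpr Hle] := dom uu pi Uu Ppi (NR uu Uu).
  exact: (le_trans Hle (Hmax pr Hpr)).
- move=> Hunb.
  case: (classic (exists uu, inU x uu /\ exists g, (forall s, lin (aP s) g <= 0) /\
           0 < lin (d - B1 *m x - E *m uu)^T g)) => [[uu [Uu [g [Hg Hwg]]]]|NR];
    last first.
    exfalso.
    have [u1 [pi1 [U1 [P1 _]]]] := Hunb 0.
    have [pr0 Hpr0 _] := dom u1 pi1 U1 P1 (fun H => NR (ex_intro _ u1 (conj U1 H))).
    have Hne : pairs != [::] by apply/eqP => Hn; rewrite Hn in Hpr0.
    have [pm Hm Hmax] := seq_max (fun pr => obj x pr.1 pr.2) Hne.
    have [u2 [pi2 [U2 [P2 Hgt]]]] := Hunb (obj x pm.1 pm.2).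
    have [pr Hpr Hle] := dom u2 pi2 U2 P2 (fun H => NR (ex_intro _ u2 (conj U2 H))).
    move: (Hmax pr Hpr) => /= H; move: Hgt Hle H; lra.
  have [_ [p0 [_ [Pp0 _]]]] := Hunb 0.
  set f := (d - B1 *m x - E *m uu)^T in Hwg *.
  pose a2 := fun s : (('I_r + 'I_ny) + bool)%type =>
    match s with inl s' => aP s' | inr bb => if bb then f else - f end.
  pose c2' := fun s : (('I_r + 'I_ny) + bool)%type =>
    match s with inl _ => 0 | inr bb => if bb then 1 else -1 end : R.
  have Hpt2 : forall d0, TT d0 -> (forall i, lin (a2 i) d0 = 0) -> d0 = 0.
    by move=> d0 _ H; apply: (pointedS (M := B2^T)) => s; apply: (H (inl (inl s))).
  have F0 : feas a2 c2' TT ((lin f g)^-1 *: g).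
    split=> // [[s|[]]] /=; rewrite ?linNr linZ.
    - by apply: mulr_ge0_le0 (Hg s); rewrite invr_ge0 ltW.
    - by rewrite mulVf ?lt0r_neq0.
    - by rewrite mulVf ?lt0r_neq0.
  have [[g' [_ [_ H0]]]|[ga [Fga [Bga _]]]] := vertex_or_ray HDT HQT Hpt2 0 F0.
    by move: H0; rewrite /lin mul0mx mxE ltxx.
  have [_ Fga'] := Fga.
  have Hfga : lin f ga = 1.
    by have := Fga' (inr true); have := Fga' (inr false); rewrite /= linNr; lra.
  have HgaP : forall s, lin (aP s) ga <= 0 := fun s => Fga' (inl s).
  have rcE : forall gg, recession_cone Pi gg <-> forall s, lin (aP s) gg <= 0.
    move=> gg; split.
    - move=> Hrc s; rewrite leNgt; apply/negP => Hs.
      pose t := (`|cP s - lin (aP s) p0| + 1) / lin (aP s) gg.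
      have t0 : 0 <= t.
        by rewrite /t divr_ge0 // ?ltW //; have := normr_ge0 (cP s - lin (aP s) p0); lra.
      have [_ Ht] := (PiE _).1 (Hrc p0 Pp0 t t0).
      move: (Ht s) (ler_norm (cP s - lin (aP s) p0)).
      rewrite linD linZ /t (divfK (lt0r_neq0 Hs)); lra.
    - move=> H p1 Pp1 t t0; apply/PiE; apply: (feas_ray HQT) => //; exact/PiE.
  exists uu, ga; split=> //; split; last by rewrite objE -/f Hfga ltr01.
  split; first exact/rcE.
  split.
    apply/eqP => Hga0; move: Hfga; rewrite Hga0 lin0 => H01.
    by move: (@ltr01 R); rewrite H01 ltxx.
  move=> g1 g2 R1 R2 Hsum.
  have H1 := (rcE g1).1 R1; have H2 := (rcE g2).1 R2.
  have Hg1 : g1 = lin f g1 *: ga.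
    apply/eqP; rewrite -subr_eq0; apply/eqP; apply: Bga => // s.
    rewrite inE => /eqP Hs; rewrite linB linZ.
    case: s Hs => [s|[]] /= Hs.
    + rewrite Hs mulr0 subr0.
      have : lin (aP s) ga = lin (aP s) g1 + lin (aP s) g2 by rewrite Hsum linD.
      move: (H1 s) (H2 s); rewrite Hs; lra.
    + by rewrite Hfga mulr1 subrr.
    + rewrite !linNr Hfga; lra.
  exists (lin f g1); split => //.
  have [i Hi] : exists i, ga i 0 != 0.
    apply: NNPP => Hn.
    have Hga0 : ga = 0.
      apply/matrixP => i j; rewrite (ord1 j) [RHS]mxE; apply: NNPP => Hi.
      by apply: Hn; exists i; apply/eqP.
    by move: Hfga; rewrite Hga0 lin0 => H01; move: (@ltr01 R); rewrite H01 ltxx.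
  have Gi : 0 <= ga i 0 by have := HgaP (inl i); rewrite rowsS_neg; lra.
  have G1i : 0 <= g1 i 0 by have := H1 (inl i); rewrite rowsS_neg; lra.
  have Gpos : 0 < ga i 0 by rewrite lt_def Hi Gi.
  have : g1 i 0 = lin f g1 * ga i 0 by rewrite {1}Hg1 mxE.
  move: G1i Gpos; nra.
Qed.
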